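(* Let $\alpha\ge1$. If all valuation functions are symmetric submodular and every item cost function is non-decreasing and $\alpha$-average-decreasing, then for every (truthfully reported) valuation profile the allocation $A$ output by IACSM satisfies $\pi(A)\le 2\alpha^3H_n\cdot\pi(A^* )$, where $A^*$ is an allocation minimizing the social cost $\pi$.
   Context: Players $N=\{1,\dots,n\}$, items $M=\{1,\dots,m\}$, non-decreasing valuations $v_i:2^M\to\mathbb{R}_{\ge0}$; symmetric: $f(S)=f(T)$ whenever $|S|=|T|$; submodular: $f(S\cup\{x\})-f(S)\ge f(T\cup\{x\})-f(T)$ for $S\subseteq T$, $x\notin T$. Item cost functions $c_j:2^N\to\mathbb{R}_{\ge0}$; $c$ is $\alpha$-average-decreasing if $\alpha\frac{c(S)}{|S|}\ge\frac{c(T)}{|T|}$ for all nonempty $S\subseteq T\subseteq N$. For an allocation $A=(A_1,\dots,A_n)$, $T_j=\{i:j\in A_i\}$ and the social cost is $\pi(A)=\sum_{j\in M}c_j(T_j)+\sum_{i\in N}(v_i(M)-v_i(A_i))$. $H_n=\sum_{k=1}^n1/k$. Mechanism IACSM (input: declared valuations $b$): maintain active set $X=N$, sets $T_j=N$ and cost shares $\chi_j=c_j(N)/n$ for all items $j$. While $X\neq\emptyset$: (1) every $i\in X$ computes $A_i\in\arg\max_{S\subseteq M}\{b_i(S)-\sum_{j\in S}\chi_j\}$, choosing among maximizers one of maximum cardinality $k$, and among those the $k$ items with smallest current $\chi_j$ (item ties by index); (2) choose $i^*\in X$ with $|A_{i^*}|$ minimum (ties by smallest index); (3) assign $A_{i^*}$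 to $i^*$ permanently and remove $i^*$ from $X$; (4) for every item $j\notin A_{i^*}$ set $T_j:=T_j\setminus\{i^*\}$ and, if $T_j\ne\emptyset$, set $\chi_j:=\max\{\chi_j,c_j(T_j)/|T_j|\}$. Output the assigned bundles and payments $p_i=\sum_{j\in A_i}\chi_j$ with final cost shares. *)

(* Defs.v *)
From HB Require Import structures.
From mathcomp Require Import all_boot all_order all_algebra.
Set Implicit Arguments. Unset Strict Implicit. Unset Printing Implicit Defensive.
Import Order.TTheory GRing.Theory Num.Theory.
Local Open Scope ring_scope.

Section IACSM.
Variables (R : realFieldType) (n m : nat).

Definition setfun_nondecreasing {T : finType} (f : {set T} -> R) : Prop :=
  forall S U : {set T}, S \subset U -> f S <= f U.

Definition setfun_symmetric {T : finType} (f : {set T} -> R) : Prop :=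
  forall S U : {set T}, #|S| = #|U| -> f S = f U.

Definition setfun_submodular {T : finType} (f : {set T} -> R) : Prop :=
  forall (S U : {set T}) (x : T), S \subset U -> x \notin U ->
    f (x |: S) - f S >= f (x |: U) - f U.

Definition avg_decreasing (alpha : R) (c : {set 'I_n} -> R) : Prop :=
  forall S U : {set 'I_n}, S != set0 -> S \subset U ->
    alpha * (c S / #|S|%:R) >= c U / #|U|%:R.

(* an allocation gives every player a bundle; items may be shared *)
Definition players_of (A : 'I_n -> {set 'I_m}) (j : 'I_m) : {set 'I_n} :=
  [set i | j \in A i].

Definition social_cost (v : 'I_n -> {set 'I_m} -> R) (c : 'I_m -> {set 'I_n} -> R)
  (A : 'I_n -> {set 'I_m}) : R :=
  \sum_(j < m) c j (players_of A j) + \sum_(i < n) (v i setT - v i (A i)).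

Definition harmonic (k : nat) : R := \sum_(l < k) (l.+1%:R)^-1.

Record state := State {
  st_X : {set 'I_n};                 (* active players *)
  st_T : 'I_m -> {set 'I_n};
  st_chi : 'I_m -> R;                (* current cost shares *)
  st_alloc : 'I_n -> {set 'I_m}      (* permanently assigned bundles *)
}.

Definition utility (b : {set 'I_m} -> R) (chi : 'I_m -> R) (S : {set 'I_m}) : R :=
  b S - \sum_(j in S) chi j.

Definition best_card (b : {set 'I_m} -> R) (chi : 'I_m -> R) : nat :=
  \max_(S : {set 'I_m} | [forall U : {set 'I_m}, utility b chi U <= utility b chi S])
     #|S|.

Definition item_prec (chi : 'I_m -> R) (j j' : 'I_m) : bool :=
  (chi j < chi j') || ((chi j == chi j') && (j < j')%N).

Definition cheapest (chi : 'I_m -> R) (k : nat) : {set 'I_m} :=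
  [set j | #|[set j' | item_prec chi j' j]| < k]%N.

Definition demand (b : {set 'I_m} -> R) (chi : 'I_m -> R) : {set 'I_m} :=
  cheapest chi (best_card b chi).

Definition iacsm_step (b : 'I_n -> {set 'I_m} -> R) (c : 'I_m -> {set 'I_n} -> R)
  (s : state) : state :=
  let D := fun i => demand (b i) (st_chi s) in
  match [pick i in st_X s | [forall i' in st_X s,
            (#|D i| < #|D i'|)%N || ((#|D i| == #|D i'|) && (i <= i')%N)]] with
  | None => s
  | Some i =>
      let T' := fun j => if j \in D i then st_T s j else st_T s j :\ i in
      State (st_X s :\ i) T'
        (fun j => if (j \notin D i) && (T' j != set0)
                  then Num.max (st_chi s j) (c j (T' j) / #|T' j|%:R)
                  else st_chi s j)
        (fun k => if k == i then D i else st_alloc s k)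
  end.

Definition iacsm_init (c : 'I_m -> {set 'I_n} -> R) : state :=
  State setT (fun _ => setT) (fun j => c j setT / n%:R) (fun _ => set0).

(* each step removes one active player; n steps empty X *)
Definition iacsm_alloc (b : 'I_n -> {set 'I_m} -> R) (c : 'I_m -> {set 'I_n} -> R)
  : 'I_n -> {set 'I_m} :=
  st_alloc (iter n (iacsm_step b c) (iacsm_init c)).

End IACSM.

(* Main.v *)
Require Import Defs.
From HB Require Import structures.
From mathcomp Require Import all_boot all_order all_algebra.
From mathcomp Require Import ring lra zify.
Import Order.TTheory GRing.Theory Num.Theory.
Local Open Scope ring_scope.
Set Implicit Arguments. Unset Strict Implicit. Unset Printing Implicit Defensive.

Section Rank.
Variables (R : realFieldType) (m : nat) (chi : 'I_m -> R).

Definition rank (j : 'I_m) := #|[set j' | item_prec chi j' j]|.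

Lemma prec_irr j : ~~ item_prec chi j j.
Proof. by rewrite /item_prec ltxx eqxx ltnn. Qed.

Lemma prec_trans x y z : item_prec chi x y -> item_prec chi y z -> item_prec chi x z.
Proof.
rewrite /item_prec => /orP [h1|/andP[/eqP e1 h1]] /orP [h2|/andP[/eqP e2 h2]]; apply/orP.
- by left; exact: lt_trans h1 h2.
- by left; rewrite -e2.
- by left; rewrite e1.
- by right; rewrite e1 e2 eqxx (ltn_trans h1 h2).
Qed.

Lemma prec_total x y : x != y -> item_prec chi x y || item_prec chi y x.
Proof.
move=> nxy; rewrite /item_prec.
case: (ltgtP (chi x) (chi y)) => //= e.
idtac.
case: (ltngtP x y) => // exy.
by move: nxy; rewrite (val_inj exy) eqxx.
Qed.

Lemma prec_le x y : item_prec chi x y -> chi x <= chi y.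
Proof. by rewrite /item_prec => /orP [/ltW //|/andP[/eqP -> _]]. Qed.

Lemma rank_lt x y : item_prec chi x y -> (rank x < rank y)%N.
Proof.
move=> H; apply: proper_card; apply/properP; split.
  by apply/subsetP => z; rewrite !inE => h; exact: prec_trans h H.
by exists x; rewrite !inE ?H ?prec_irr.
Qed.

Lemma rank_prec x y : (rank x < rank y)%N -> item_prec chi x y.
Proof.
move=> h; case: (eqVneq x y) => [e|nxy]; first by rewrite e ltnn in h.
case/orP: (prec_total nxy) => // /rank_lt h2.
by move: (ltn_trans h h2); rewrite ltnn.
Qed.

Lemma rank_inj : injective rank.
Proof.
move=> x y e; apply/eqP; apply/negPn/negP => nxy.
by case/orP: (prec_total nxy) => /rank_lt; rewrite e ltnn.
Qed.

Lemma rank_ltm x : (rank x < m)%N.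
Proof.
have h : [set j' | item_prec chi j' x] \subset [set~ x].
  by apply/subsetP => z; rewrite !inE; apply: contraTneq => ->; exact: prec_irr.
have := subset_leq_card h; rewrite cardsC1 card_ord /rank.
move=> h2; apply: (leq_ltn_trans h2).
by rewrite prednK // (leq_ltn_trans (leq0n x) (ltn_ord x)).
Qed.

Lemma mem_cheapest j k : (j \in cheapest chi k) = (rank j < k)%N.
Proof. by rewrite inE. Qed.

Lemma cheapest_mono k k' : (k <= k')%N -> cheapest chi k \subset cheapest chi k'.
Proof.
move=> h; apply/subsetP => j; rewrite !mem_cheapest => h2; exact: leq_trans h2 h.
Qed.

Lemma card_ltset k : (k <= m)%N -> #|[set r : 'I_m | (r < k)%N]| = k.
Proof.
move=> hk.
have -> : [set r : 'I_m | (r < k)%N] = [set widen_ord hk r | r in 'I_k].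
  apply/setP => r; rewrite inE; apply/idP/imsetP.
    by move=> h; exists (Ordinal h) => //; apply: val_inj.
  by case=> r' _ ->; rewrite /= ltn_ord.
rewrite card_imset ?card_ord //.
by move=> x y /(congr1 val) /= e; apply: val_inj.
Qed.

Lemma card_cheapest k : (k <= m)%N -> #|cheapest chi k| = k.
Proof.
move=> hk.
pose f (j : 'I_m) : 'I_m := Ordinal (rank_ltm j).
have finj : injective f by move=> x y /(congr1 val) /= /rank_inj.
have -> : cheapest chi k = f @^-1: [set r : 'I_m | (r < k)%N].
  by apply/setP => j; rewrite !inE.
by rewrite card_preimset // card_ltset.
Qed.

Lemma cheapest_cmp j y k : j \in cheapest chi k -> y \notin cheapest chi k ->
  chi j <= chi y.
Proof.
rewrite !mem_cheapest -leqNgt => h1 h2.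
exact/prec_le/rank_prec/(leq_trans h1 h2).
Qed.

End Rank.

Lemma sum_exchange_le (R : realFieldType) (T : finType) (f : T -> R) :
  forall k (A B : {set T}), #|A| = k -> #|B| = k ->
  (forall x y, x \in A -> y \in B -> f x <= f y) ->
  \sum_(x in A) f x <= \sum_(x in B) f x.
Proof.
elim=> [|k IH] A B hA hB H.
  by move/eqP: hA; rewrite cards_eq0 => /eqP ->; move/eqP: hB; rewrite cards_eq0 => /eqP ->.
have : (0 < #|A|)%N by rewrite hA.
case/card_gt0P => a Ha.
have : (0 < #|B|)%N by rewrite hB.
case/card_gt0P => b Hb.
rewrite (big_setD1 a Ha) (big_setD1 b Hb) /=.
apply: lerD; first exact: H.
apply: IH.
- by move: hA; rewrite (cardsD1 a A) Ha add1n => -[].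
- by move: hB; rewrite (cardsD1 b B) Hb add1n => -[].
by move=> x y; rewrite !inE => /andP[_ hx] /andP[_ hy]; exact: H.
Qed.

Lemma sorted_sum (R : realFieldType) (m : nat) (chi : 'I_m -> R) k (S : {set 'I_m}) :
  #|S| = #|cheapest chi k| ->
  \sum_(j in cheapest chi k) chi j <= \sum_(j in S) chi j.
Proof.
move=> hS.
set C := cheapest chi k.
rewrite (big_setID S) [X in _ <= X](big_setID C) /= setIC.
apply: lerD => //.
apply: (@sum_exchange_le _ _ _ #|C :\: S|) => //.
  by rewrite !cardsD hS setIC.
move=> x y; rewrite !inE => /andP[hxS hxC] /andP[hyC hyS].
by apply: (@cheapest_cmp _ _ chi x y k); rewrite mem_cheapest.
Qed.
Section Demand.
Variables (R : realFieldType) (m : nat) (b : {set 'I_m} -> R).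
Hypothesis bsym : setfun_symmetric b.

Lemma exists_max (chi : 'I_m -> R) : exists S, forall U, utility b chi U <= utility b chi S.
Proof.
case: (@arg_maxP _ R _ set0 predT (utility b chi)) => // S _ H.
by exists S => U; exact: H.
Qed.

Lemma bc_spec chi : exists2 S, (forall U, utility b chi U <= utility b chi S)
   & #|S| = best_card b chi.
Proof.
have [S0 H0] := exists_max chi.
have hA : (0 < #|[pred S | [forall U, (utility b chi U <= utility b chi S)%R]]|)%N.
  apply/card_gt0P; exists S0; rewrite inE; exact/forallP.
case: (eq_bigmax_cond (fun S : {set 'I_m} => #|S|) hA) => S.
rewrite inE => /forallP HS e; exists S => //.
Qed.

Lemma bc_ge chi S : (forall U, utility b chi U <= utility b chi S) ->
  (#|S| <= best_card b chi)%N.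
Proof.
move=> H; rewrite /best_card.
apply: (@leq_bigmax_cond _ (fun S => [forall U, (utility b chi U <= utility b chi S)%R])
   (fun S : {set 'I_m} => #|S|) S).
exact/forallP.
Qed.

Lemma bc_lem chi : (best_card b chi <= m)%N.
Proof.
case: (bc_spec chi) => S _ <-; have := max_card S; by rewrite card_ord.
Qed.

Lemma demand_opt chi U : utility b chi U <= utility b chi (demand b chi).
Proof.
case: (bc_spec chi) => S HS hk.
apply: (le_trans (HS U)).
rewrite /utility /demand.
have hc : #|cheapest chi (best_card b chi)| = best_card b chi.
  by apply: card_cheapest; apply: bc_lem.
rewrite (bsym (_ : #|cheapest chi (best_card b chi)| = #|S|)); last by rewrite hc.
apply: lerB => //; apply: sorted_sum; by rewrite hc.
Qed.

Hypothesis bsub : setfun_submodular b.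

Definition gg (s : nat) := b [set x : 'I_m | (x < s)%N].

Lemma b_gg S : b S = gg #|S|.
Proof. apply: bsym; rewrite card_ltset //; have := max_card S; by rewrite card_ord. Qed.

Lemma concave s s' : (s <= s')%N -> (s'.+1 <= m)%N -> gg s'.+1 - gg s' <= gg s.+1 - gg s.
Proof.
move=> hss hs'.
pose x : 'I_m := Ordinal hs'.
have hS : [set y : 'I_m | (y < s)%N] \subset [set y : 'I_m | (y < s')%N].
  by apply/subsetP => y; rewrite !inE => h; exact: leq_trans h hss.
have hx : x \notin [set y : 'I_m | (y < s')%N] by rewrite inE ltnn.
have := bsub hS hx.
have hxS : x \notin [set y : 'I_m | (y < s)%N].
  by rewrite inE -leqNgt.
have sm : (s <= m)%N by apply: (leq_trans hss); exact: ltnW.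
have sm' : (s' <= m)%N by exact: ltnW.
rewrite /gg !b_gg (cardsU1 x) (cardsU1 x) (negbTE hx) (negbTE hxS) !card_ltset //.
exact: leq_ltn_trans hss hs'.
Qed.

Lemma sum_concave a d : (0 < d)%N -> (d <= m)%N -> forall k, (a + k <= d)%N ->
  k%:R * (gg d - gg d.-1) <= gg (a + k) - gg a.
Proof.
move=> d0 dm; elim=> [|k IH] h; first by rewrite mul0r addn0 subrr.
have h1 : (a + k <= d)%N by apply: ltnW; rewrite -addnS.
have := IH h1.
have hc : gg d - gg d.-1 <= gg (a + k).+1 - gg (a + k).
  have := @concave (a + k) d.-1; rewrite prednK //; apply.
    by rewrite -ltnS prednK // -addnS.
  done.
rewrite addnS => h2.
rewrite -addn1 natrD mulrDl mul1r.
have -> : gg (a + k).+1 - gg a = (gg (a + k) - gg a) + (gg (a+k).+1 - gg (a + k)) by ring.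
exact: lerD.
Qed.

Lemma demand_keep (chi chi' : 'I_m -> R) j :
  j \in demand b chi -> (forall x, chi x <= chi' x) -> chi' j = chi j ->
  j \in demand b chi'.
Proof.
rewrite /demand mem_cheapest => hj hle heq.
set k := best_card b chi in hj.
have km : (k <= m)%N by apply: bc_lem.
set D := cheapest chi k.
have hD : #|D| = k by apply: card_cheapest.
have jD : j \in D by rewrite mem_cheapest.
have k0 : (0 < k)%N by apply: leq_ltn_trans hj.
have hdelta : chi j <= gg k - gg k.-1.
  have := demand_opt chi (D :\ j); rewrite /utility /demand -/k -/D.
  rewrite (big_setD1 j jD) /= !b_gg hD.
  have -> : #|D :\ j| = k.-1 by rewrite -hD (cardsD1 j D) jD.
  move=> h; lra.
set r' := rank chi' j.
have hr' : (r' < k)%N.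
  apply: leq_ltn_trans hj; apply: subset_leq_card.
  apply/subsetP => x; rewrite !inE /item_prec heq => /orP [h|/andP[/eqP e h]].
    by apply/orP; left; exact: le_lt_trans (hle x) h.
  have := hle x; rewrite e le_eqVlt => /orP [/eqP ->|->] //.
  by rewrite eqxx h orbT.
rewrite mem_cheapest ltnNge; apply/negP => hk'.
set k' := best_card b chi' in hk'.
have rm : (r' < m)%N by apply: rank_ltm.
set C := cheapest chi' k'.
have hC : #|C| = k' by apply: card_cheapest; exact: leq_trans hk' (ltnW rm).
set E := j |: [set x | item_prec chi' x j].
have jR : j \notin [set x | item_prec chi' x j] by rewrite inE prec_irr.
have hE : #|E| = r'.+1 by rewrite cardsU1 jR.
have CE : C \subset E.
  apply/subsetP => x; rewrite mem_cheapest => hx; rewrite !inE; apply/orP; right.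
  by apply: rank_prec; exact: leq_trans hx hk'.
have EC : E :&: C = C by rewrite setIC; apply/setIidPl.
have hEC : #|E :\: C| = (r'.+1 - k')%N by rewrite cardsD EC hE hC.
have hsum : \sum_(i in E :\: C) chi' i <= #|E :\: C|%:R * chi j.
  rewrite mulr_natl -sumr_const; apply: ler_sum => x; rewrite !inE => /andP[_ /orP [/eqP ->|h]].
    by rewrite heq.
  by rewrite -heq; apply: prec_le.
have hg : #|E :\: C|%:R * (gg k - gg k.-1) <= gg (k' + #|E :\: C|) - gg k'.
  apply: sum_concave => //; rewrite hEC subnKC //; exact: leq_trans hk' (leqnSn _).
have hcj : #|E :\: C|%:R * chi j <= #|E :\: C|%:R * (gg k - gg k.-1).
  by apply: ler_wpM2l => //; rewrite ler0n.
have Emax : forall U, utility b chi' U <= utility b chi' E.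
  move=> U; apply: (le_trans (demand_opt chi' U)); rewrite /demand -/k' -/C.
  rewrite /utility [\sum_(i in E) _](big_setID C) /= EC !b_gg hC hE.
  move: hg hsum hcj; rewrite hEC subnKC; last exact: leq_trans hk' (leqnSn _).
  move=> hg hsum hcj; lra.
have := bc_ge Emax; rewrite hE -/k' => h.
by move: (leq_ltn_trans h (leq_ltn_trans hk' (ltnSn r'))); rewrite ltnn.
Qed.

End Demand.
Section Mech.
Variables (R : realFieldType) (n m : nat).
Variables (v : 'I_n -> {set 'I_m} -> R) (c : 'I_m -> {set 'I_n} -> R) (alpha : R).
Variable (B : 'I_n -> {set 'I_m}).
Hypothesis alpha0 : 0 <= alpha.
Hypothesis vsym : forall i, setfun_symmetric (v i).
Hypothesis vsub : forall i, setfun_submodular (v i).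
Hypothesis cmono : forall j, setfun_nondecreasing (c j).
Hypothesis cavg : forall j, avg_decreasing alpha (c j).

Definition LHS (s : state R n m) :=
  \sum_(i | i \notin st_X s)
     (v i setT - v i (st_alloc s i) + \sum_(j in st_alloc s i) st_chi s j).

Definition RHS (s : state R n m) :=
  \sum_(i | i \notin st_X s) (v i setT - v i (B i)) +
  alpha * \sum_(j < m) c j (players_of B j) *
     (harmonic R #|players_of B j| - harmonic R #|players_of B j :&: st_X s|).

Definition Inv (s : state R n m) :=
 [/\ (forall j, st_T s j = st_X s :|: [set i | (i \notin st_X s) && (j \in st_alloc s i)]),
     (forall j, st_T s j != set0 -> c j (st_T s j) <= #|st_T s j|%:R * st_chi s j),
     (forall i i', i \notin st_X s -> i' \in st_X s ->
         st_alloc s i \subset demand (v i') (st_chi s)),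
     (forall j Q, Q != set0 -> Q \subset st_X s -> st_chi s j <= alpha * (c j Q / #|Q|%:R)) &
     LHS s <= RHS s].

Lemma harmonicS k : harmonic R k.+1 = harmonic R k + (k.+1%:R)^-1.
Proof. by rewrite /harmonic big_ord_recr. Qed.

Lemma step_inv (s : state R n m) i :
  Inv s -> i \in st_X s ->
  (forall i', i' \in st_X s -> demand (v i) (st_chi s) \subset demand (v i') (st_chi s)) ->
  let D := demand (v i) (st_chi s) in
  let T' := fun j => if j \in D then st_T s j else st_T s j :\ i in
  Inv (State (st_X s :\ i) T'
        (fun j => if (j \notin D) && (T' j != set0)
                  then Num.max (st_chi s j) (c j (T' j) / #|T' j|%:R)
                  else st_chi s j)
        (fun k => if k == i then D else st_alloc s k)).
Proof.
case: s => X T chi al /=.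
move=> [/= I1 I4 I5 I7 I2] iX nest.
set D := demand (v i) chi.
set T' := fun j => if j \in D then T j else T j :\ i.
set chi' := fun j => if (j \notin D) && (T' j != set0) then _ else _.
set al' := fun k => if k == i then D else al k.
have hle : forall j, chi j <= chi' j.
  by move=> j; rewrite /chi'; case: ifP => _ //; rewrite le_max lexx.
have heqD : forall j, j \in D -> chi' j = chi j by move=> j jD; rewrite /chi' jD.
have allocD : forall k, k \notin X -> al k \subset D by move=> k kX; exact: I5.
have XT : forall j, X \subset T j by move=> j; rewrite I1 subsetUl.
have XT' : forall j, X :\ i \subset T' j.
  move=> j; rewrite /T'; case: ifP => _; last exact: setSD.
  exact: subset_trans (subsetDl _ _) (XT j).
split => /=.
- move=> j; apply/setP => k; rewrite /T' /al'.
  have hk : (k \in T j) = (k \in X) || ((k \notin X) && (j \in al k)).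
    by rewrite I1 in_setU inE.
  rewrite in_setU in_setD1 [k \in [set _ | _]]inE in_setD1.
  case: ifP => jD; rewrite ?in_setD1 hk; case: (eqVneq k i) => [->|ki] /=;
    rewrite ?iX ?jD //=.
- move=> j; rewrite /chi'; case: ifP => [/andP[jD hT]|hc] hT'.
    have n0 : #|T' j|%:R != 0 :> R by rewrite pnatr_eq0 cards_eq0.
    apply: (@le_trans _ _ (#|T' j|%:R * (c j (T' j) / #|T' j|%:R))).
      by rewrite mulrC divfK.
    by apply: ler_wpM2l; [rewrite ler0n | rewrite le_max lexx orbT].
  have jD : j \in D by move: hc; rewrite hT' andbT => /negbFE.
  move: hT'; rewrite /T' jD => hT'; exact: I4.
- move=> k i'; rewrite !in_setD1 negb_and negbK => hk /andP[i'i i'X].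
  apply/subsetP => x hx.
  have [xD xd] : x \in D /\ x \in demand (v i') chi.
    move: hx; rewrite /al'; case: (eqVneq k i) => [_|ki] hx.
      by split => //; exact: (subsetP (nest i' i'X)).
    have kX : k \notin X by move: hk; rewrite (negbTE ki).
    by split; [exact: (subsetP (allocD k kX)) | exact: (subsetP (I5 k i' kX i'X))].
  exact: (demand_keep (vsym i') (vsub i') xd hle (heqD x xD)).
- move=> j Q Q0 QX.
  have QX0 : Q \subset X by exact: subset_trans QX (subsetDl _ _).
  rewrite /chi'; case: ifP => _; last exact: I7.
  rewrite ge_max I7 //=.
  exact: (cavg j Q0 (subset_trans QX (XT' j))).
- rewrite /LHS /RHS /=.
  have iX' : i \notin X :\ i by rewrite in_setD1 eqxx.
  have pred_eq : forall k, (k \notin X :\ i) && (k != i) = (k \notin X).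
    move=> k; rewrite in_setD1 negb_and negbK.
    by case: (eqVneq k i) => [->|]; rewrite ?iX ?andbT ?andbF.
  rewrite (bigD1 i iX') [X in _ <= X + _](bigD1 i iX') /=.
  rewrite !(eq_bigl _ _ pred_eq).
  have -> : \sum_(k | k \notin X)
      (v k setT - v k (al' k) + \sum_(j in al' k) chi' j) =
      \sum_(k | k \notin X) (v k setT - v k (al k) + \sum_(j in al k) chi j).
    apply: eq_bigr => k kX.
    have ki : k != i by apply: contraNneq kX => ->.
    rewrite /al' (negbTE ki); congr (_ + _).
    apply: eq_bigr => j jal; apply: heqD; exact: (subsetP (allocD k kX)).
  rewrite /al' eqxx.
  have -> : \sum_(j in D) chi' j = \sum_(j in D) chi j.
    by apply: eq_bigr => j jD; apply: heqD.
  have key : v i setT - v i D + \sum_(j in D) chi j <=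
             v i setT - v i (B i) + \sum_(j in B i) chi j.
    have := demand_opt (vsym i) chi (B i); rewrite /utility -/D => h; lra.
  set P := players_of B.
  have harm : \sum_(j in B i) chi j <=
     alpha * \sum_(j < m) c j (P j) *
        (harmonic R #|P j :&: X| - harmonic R #|P j :&: (X :\ i)|).
    rewrite big_mkcond /= mulr_sumr; apply: ler_sum => j _.
    case: ifP => jB.
      have iP : i \in P j :&: X by rewrite inE iX andbT /P /players_of inE.
      have e : P j :&: (X :\ i) = (P j :&: X) :\ i by rewrite setIDA.
      have hc : #|P j :&: X| = #|P j :&: (X :\ i)|.+1 by rewrite e (cardsD1 i) iP.
      rewrite hc harmonicS addrAC subrr add0r.
      have Q0 : P j :&: X != set0 by apply/set0Pn; exists i.
      apply: (le_trans (I7 j _ Q0 (subsetIr _ _))).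
      rewrite -hc; apply: ler_wpM2l => //.
      apply: ler_wpM2r; first by rewrite invr_ge0 ler0n.
      exact: cmono (subsetIl _ _).
    have iP : i \notin P j :&: X by rewrite inE /P /players_of inE jB.
    have e : P j :&: (X :\ i) = P j :&: X.
      rewrite setIDA; apply/setP => k; rewrite in_setD1.
      by case: (eqVneq k i) => [->|] //=; rewrite (negbTE iP).
    by rewrite e subrr mulr0 mulr0.
  have split_sum : \sum_(j < m) c j (P j) * (harmonic R #|P j| - harmonic R #|P j :&: (X :\ i)|)
     = \sum_(j < m) c j (P j) * (harmonic R #|P j| - harmonic R #|P j :&: X|)
       + \sum_(j < m) c j (P j) *
        (harmonic R #|P j :&: X| - harmonic R #|P j :&: (X :\ i)|).
    by rewrite -big_split /=; apply: eq_bigr => j _; ring.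
  rewrite split_sum.
  move: I2; rewrite /LHS /RHS /= -/P => I2.
  lra.
Qed.

Lemma cheapest_nest (chi : 'I_m -> R) k k' :
  (#|cheapest chi k| <= #|cheapest chi k'|)%N -> cheapest chi k \subset cheapest chi k'.
Proof.
move=> hc; case: (leqP k k') => h; first exact: cheapest_mono.
have sub := cheapest_mono chi (ltnW h).
have /eqP -> // : cheapest chi k' == cheapest chi k by rewrite eqEcard sub hc.
Qed.

Lemma step_ok (s : state R n m) : Inv s -> st_X s != set0 ->
  Inv (iacsm_step v c s) /\ #|st_X (iacsm_step v c s)| = (#|st_X s| - 1)%N.
Proof.
move=> Hinv X0; rewrite /iacsm_step.
case: pickP => [i /andP[iX /forallP Hm] | Hn] /=.
  have nest : forall i', i' \in st_X s ->
      demand (v i) (st_chi s) \subset demand (v i') (st_chi s).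
    move=> i' i'X; move/implyP: (Hm i') => /(_ i'X) h.
    apply: cheapest_nest.
    case/orP: h => [/ltnW //|/andP[/eqP -> _] //].
  split; first exact: (step_inv Hinv iX nest).
  by rewrite (cardsD1 i (st_X s)) iX add1n subn1.
exfalso.
case/set0Pn: X0 => i0 i0X.
pose key (i : 'I_n) := (#|demand (v i) (st_chi s)| * n + i)%N.
case: (arg_minnP key i0X) => i iX Hmin.
have iX' : i \in st_X s := iX.
move: (Hn i); rewrite iX' /=; move/negbT/negP; apply.
apply/forallP => i'; apply/implyP => i'X.
have := Hmin i' i'X; rewrite /key.
have hi := ltn_ord i; have hi' := ltn_ord i'.
set a := #|demand (v i) _|; set a' := #|demand (v i') _|.
move=> h.
case: (ltnP a a') => [//|ge].
case: (ltnP a' a) => [lt|le].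
  have : (a'.+1 * n <= a * n)%N by rewrite leq_mul2r lt orbT.
  rewrite mulSn; lia.
have e : a = a' by apply/eqP; rewrite eqn_leq ge le.
rewrite e in h *; rewrite eqxx /=; lia.
Qed.

Lemma init_inv : Inv (iacsm_init c).
Proof.
rewrite /iacsm_init; split => /=.
- by move=> j; rewrite setTU.
- move=> j hT; rewrite cardsT card_ord.
  have n0 : n%:R != 0 :> R.
    rewrite pnatr_eq0; apply/eqP => e; move: hT; apply/negP; rewrite negbK.
    by apply/eqP/setP => x; case: x; rewrite e.
  by rewrite mulrC divfK.
- by move=> i i'; rewrite in_setT.
- move=> j Q Q0 _.
  have := cavg j Q0 (subsetT Q); by rewrite cardsT card_ord.
- rewrite /LHS /RHS /= big_pred0; last by move=> i; rewrite in_setT.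
  rewrite big_pred0; last by move=> i; rewrite in_setT.
  rewrite big1 ?mulr0 ?add0r // => j _; by rewrite setIT subrr mulr0.
Qed.

Lemma iter_inv t : (t <= n)%N ->
  Inv (iter t (iacsm_step v c) (iacsm_init c)) /\
  #|st_X (iter t (iacsm_step v c) (iacsm_init c))| = (n - t)%N.
Proof.
elim: t => [|t IH] ht.
  by split; [exact: init_inv | rewrite /= cardsT card_ord subn0].
have [Hi Hc] := IH (ltnW ht).
have X0 : st_X (iter t (iacsm_step v c) (iacsm_init c)) != set0.
  by rewrite -card_gt0 Hc subn_gt0.
have [Hi' Hc'] := step_ok Hi X0.
split => //=; rewrite Hc' Hc; lia.
Qed.

Hypothesis c0 : forall j, c j set0 = 0.

Lemma final_bound : social_cost v c (iacsm_alloc v c) <=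
   \sum_(i < n) (v i setT - v i (B i)) +
   alpha * \sum_(j < m) c j (players_of B j) * harmonic R #|players_of B j|.
Proof.
have [Hi Hc] := iter_inv (leqnn n).
rewrite /iacsm_alloc; set s := iter n _ _ in Hi Hc *.
have X0 : st_X s = set0 by apply/eqP; rewrite -cards_eq0 Hc subnn.
case: Hi => I1 I4 _ _ I2.
set A := st_alloc s; set chi := st_chi s.
have hT : forall j, players_of A j = st_T s j.
  by move=> j; rewrite I1 X0 set0U; apply/setP => i; rewrite !inE.
have h0 : harmonic R 0 = 0 by rewrite /harmonic big_ord0.
have pT : forall i : 'I_n, (i \notin st_X s) = true by move=> i; rewrite X0 in_set0.
move: I2; rewrite /LHS /RHS -/A -/chi.
rewrite (eq_bigl _ _ pT) (eq_bigl _ _ pT).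
have -> : \sum_(j < m) c j (players_of B j) *
     (harmonic R #|players_of B j| - harmonic R #|players_of B j :&: st_X s|) =
   \sum_(j < m) c j (players_of B j) * harmonic R #|players_of B j|.
  by apply: eq_bigr => j _; rewrite X0 setI0 cards0 h0 subr0.
rewrite big_split /= => I2.
apply: le_trans I2.
rewrite /social_cost addrC; apply: lerD => //.
have e : \sum_(i < n) \sum_(j in A i) chi j = \sum_(j < m) #|st_T s j|%:R * chi j.
  transitivity (\sum_(j < m) \sum_(i < n) (if j \in A i then chi j else 0)).
    by rewrite exchange_big /=; apply: eq_bigr => i _; rewrite big_mkcond.
  apply: eq_bigr => j _.
  rewrite -big_mkcond /= mulr_natl -sumr_const -hT.
  by apply: eq_bigl => i; rewrite /players_of inE.
rewrite e; apply: ler_sum => j _; rewrite hT.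
case: (eqVneq (st_T s j) set0) => [->|ne]; last exact: I4.
by rewrite c0 cards0 mul0r.
Qed.
End Mech.

Lemma harmonic_ge0 (R : realFieldType) k : 0 <= harmonic R k.
Proof. by apply: sumr_ge0 => i _; rewrite invr_ge0 ler0n. Qed.

Lemma harmonic_mono (R : realFieldType) k l : (k <= l)%N -> harmonic R k <= harmonic R l.
Proof.
elim: l => [|l IH]; first by rewrite leqn0 => /eqP ->.
rewrite leq_eqVlt => /orP [/eqP ->//|]; rewrite ltnS => h.
apply: (le_trans (IH h)); rewrite harmonicS lerDl invr_ge0 ler0n //.
Qed.

Theorem mainTheorem10 (R : realFieldType) (n m : nat)
  (v : 'I_n -> {set 'I_m} -> R) (c : 'I_m -> {set 'I_n} -> R) (alpha : R) :
  1 <= alpha ->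
  (forall i S, 0 <= v i S) ->
  (forall i, setfun_nondecreasing (v i)) ->
  (forall i, setfun_symmetric (v i)) ->
  (forall i, setfun_submodular (v i)) ->
  (forall j S, 0 <= c j S) ->
  (forall j, c j set0 = 0) ->
  (forall j, setfun_nondecreasing (c j)) ->
  (forall j, avg_decreasing alpha (c j)) ->
  forall Aopt : 'I_n -> {set 'I_m},
    (forall A : 'I_n -> {set 'I_m}, social_cost v c Aopt <= social_cost v c A) ->
    social_cost v c (iacsm_alloc v c)
      <= 2 * alpha ^+ 3 * harmonic R n * social_cost v c Aopt.
Proof.
move=> a1 vpos vmono vsym vsub cpos c0 cmono cavg Aopt _.
have a0 : 0 <= alpha by apply: le_trans a1.
have hb := @final_bound R n m v c alpha Aopt a0 vsym vsub cmono cavg c0.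
set L := \sum_(i < n) (v i setT - v i (Aopt i)) in hb.
set Cs := \sum_(j < m) c j (players_of Aopt j).
set h := harmonic R n.
have hS : \sum_(j < m) c j (players_of Aopt j) * harmonic R #|players_of Aopt j| <= Cs * h.
  rewrite /Cs mulr_suml; apply: ler_sum => j _; apply: ler_wpM2l => //.
  apply: harmonic_mono; have := max_card (players_of Aopt j); by rewrite card_ord.
have L0 : 0 <= L by apply: sumr_ge0 => i _; rewrite subr_ge0; apply: vmono; exact: subsetT.
have C0 : 0 <= Cs by apply: sumr_ge0.
have h0 : 0 <= h by apply: harmonic_ge0.
have eS : social_cost v c Aopt = Cs + L by [].
rewrite eS; apply: (le_trans hb).
have a3 : alpha <= alpha ^+ 3.
  rewrite !exprS expr0 mulr1; have : 1 <= alpha * alpha by nra.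
  nra.
have t1 : alpha * (Cs * h) <= 2 * alpha ^+ 3 * h * Cs.
  have : 0 <= Cs * h by apply: mulr_ge0.
  nra.
have t2 : L <= 2 * alpha ^+ 3 * h * L.
  case: (posnP n) => [n0|npos].
    have -> : L = 0 by apply: big1 => i _; have := ltn_ord i; rewrite {2}n0.
    by rewrite mulr0.
  have h1 : 1 <= h.
    have -> : 1 = harmonic R 1 by rewrite /harmonic big_ord1 invr1.
    exact: harmonic_mono.
  have a31 : 1 <= alpha ^+ 3 by exact: le_trans a1 a3.
  have k : 1 <= 2 * alpha ^+ 3 * h by nra.
  by rewrite -[X in X <= _]mul1r; apply: ler_wpM2r.
have t3 : alpha * \sum_(j < m) c j (players_of Aopt j) * harmonic R #|players_of Aopt j| <= alpha * (Cs * h).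
  by apply: ler_wpM2l.
nra.
Qed.
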